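(* Let $X$ be a bounded geometry metric space that does not have the operator norm localization property. Then there exist $R>0$, $\kappa<1$, a sequence $(T_n)$ of operators in $\mathbb{C}_R[X]$, a sequence $(B_n)$ of finite subsets of $X$, and a sequence $(S_n)$ of positive real numbers such that: (a) $(S_n)$ is increasing and $S_n\to\infty$; (b) each $T_n$ is positive and of norm one; (c) $B_n\cap B_m=\emptyset$ for $n\ne m$; (d) if $P_n:\ell^2(X)\to\ell^2(B_n)$ is the orthogonal projection, then $P_nT_nP_n=T_n$; (e) for each $n$ and every $\xi\in\ell^2(X)$ with $\|\xi\|=1$ and $\operatorname{diam}(\operatorname{Supp}(\xi))\le S_n$, one has $\|T_n\xi\|\le\kappa$.
   Context: A metric space $X$ has bounded geometry if for each $R>0$ there is $N$ such that every ball of radius $R$ contains at most $N$ points. With $\{\delta_x\}$ the standard basis of $\ell^2(X)$ and $T_{xy}=\langle\delta_x,T\delta_y\rangle$, the propagation of a bounded operator $T$ is $\sup\{d(x,y):T_{xy}\neq0\}$, and $\mathbb{C}_R[X]$ is the set of bounded operators on $\ell^2(X)$ of propagation at most $R$. $X$ has the operator norm localization property (ONL) if for all $R\ge0$ and $c\in(0,1)$ there exists $S>0$ such that for every $T\in\mathbb{C}_R[X]$ of norm one there is $\xi\in\ell^2(X)$ of norm one with $\operatorname{diam}(\operatorname{Supp}(\xi))\le S$ and $\|T\xi\|\ge c$. *)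

(* Defs.v *)
From HB Require Import structures.
From mathcomp Require Import all_boot all_order all_algebra.
From mathcomp Require Import all_classical all_reals.
From mathcomp Require Import topology normedtype sequences esum.
From mathcomp Require Import complex.
Set Implicit Arguments. Unset Strict Implicit. Unset Printing Implicit Defensive.
Import Order.TTheory GRing.Theory Num.Theory.
Local Open Scope classical_set_scope.
Local Open Scope ring_scope.

Section L2.
Variable R : realType.
Local Notation C := R[i].
Variable X : choiceType.

Definition is_metric (d : X -> X -> R) : Prop :=
  [/\ forall x y, 0 <= d x y,
      forall x y, d x y = 0 <-> x = y,
      forall x y, d x y = d y x &
      forall x y z, d x z <= d x y + d y z].

(* bounded geometry: every closed ball of radius r contains at most N points
   (no N.+1 pairwise distinct points lie in a ball of radius r). *)
Definition bounded_geometry (d : X -> X -> R) : Prop :=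
  forall r : R, 0 < r -> exists N : nat, forall (x : X) (f : 'I_N.+1 -> X),
    injective f -> exists i, r < d x (f i).

Definition csq (z : C) : R := (@complex.Re R z) ^+ 2 + (@complex.Im R z) ^+ 2.

Definition sqnorm (xi : X -> C) : \bar R := \esum_(x in [set: X]) (csq (xi x))%:E.

Definition l2 (xi : X -> C) : Prop := (sqnorm xi < +oo)%E.

Definition norm2 (xi : X -> C) : R := Num.sqrt (fine (sqnorm xi)).

(* sum over X of an absolutely summable real family *)
Definition rsum (g : X -> R) : R :=
  fine (\esum_(x in [set: X]) (Num.max (g x) 0)%:E)
  - fine (\esum_(x in [set: X]) (Num.max (- g x) 0)%:E).

Definition csum (f : X -> C) : C :=
  @Complex R (rsum (fun x => @complex.Re R (f x))) (rsum (fun x => @complex.Im R (f x))).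

Definition inner (xi eta : X -> C) : C := csum (fun x => (conjc (xi x)) * eta x).

Definition delta (y : X) : X -> C := fun x => if pselect (x = y) then 1 else 0.

Definition supp (xi : X -> C) : set X := [set x | xi x <> 0].

Definition diam_le (d : X -> X -> R) (A : set X) (S : R) : Prop :=
  forall x y, A x -> A y -> d x y <= S.

(* Operators: maps on functions X -> C; only their behaviour on l^2 matters. *)
Definition bounded_op (T : (X -> C) -> (X -> C)) : Prop :=
  [/\ forall xi, l2 xi -> l2 (T xi),
      forall (a : C) xi eta, l2 xi -> l2 eta ->
        T (fun x => a * xi x + eta x) = (fun x => a * T xi x + T eta x) &
      exists M : R, forall xi, l2 xi -> norm2 (T xi) <= M * norm2 xi].

Definition opnorm (T : (X -> C) -> (X -> C)) : R :=
  sup [set norm2 (T xi) | xi in [set xi | l2 xi /\ norm2 xi <= 1]].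

Definition coef (T : (X -> C) -> (X -> C)) (x y : X) : C := T (delta y) x.

Definition in_CR (d : X -> X -> R) (r : R) (T : (X -> C) -> (X -> C)) : Prop :=
  bounded_op T /\ forall x y, coef T x y <> 0 -> d x y <= r.

Definition positive_op (T : (X -> C) -> (X -> C)) : Prop :=
  forall xi, l2 xi -> 0 <= inner xi (T xi).

Definition restr_ind (B : set X) (xi : X -> C) : X -> C :=
  fun x => if pselect (B x) then xi x else 0.

Definition ONL (d : X -> X -> R) : Prop :=
  forall (r c : R), 0 <= r -> 0 < c < 1 -> exists S : R, 0 < S /\
    forall T, in_CR d r T -> opnorm T = 1 ->
      exists xi, [/\ l2 xi, norm2 xi = 1, diam_le d (supp xi) S & c <= norm2 (T xi)].

End L2.

(* Main.v *)
Require Import Defs.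
From mathcomp Require Import all_boot all_order all_algebra.
From mathcomp Require Import all_classical all_reals.
From mathcomp Require Import topology normedtype sequences esum.
From mathcomp Require Import complex.
From mathcomp Require Import ring lra.
Import Order.TTheory GRing.Theory Num.Theory.
Local Open Scope classical_set_scope.
Local Open Scope ring_scope.
Set Implicit Arguments. Unset Strict Implicit. Unset Printing Implicit Defensive.

Section Base.
Variable R : realType.
Variable X : choiceType.
Local Notation C := R[i].
Implicit Types (f : X -> C) (s G : seq X).

Lemma esum_seq (s : seq X) (f : X -> R) : uniq s ->
  (forall x, x \notin s -> f x = 0) -> (forall x, 0 <= f x) ->
  \esum_(x in [set: X]) (f x)%:E = (\sum_(x <- s) f x)%:E.
Proof.
move=> us fs f0.
transitivity (\esum_(x in [set: X]) (if x \in [set` s] then (f x)%:E else 0%E)).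
  apply: eq_esum => x _; case: ifP => //; rewrite mem_setE => /negbT/fs ->//.
rewrite -esum_mkcond esum_fset; last by move=> i _; rewrite lee_fin.
  by rewrite -fsbig_seq // sumEFin.
exact: finite_seq.
Qed.

Definition csq' (z : C) := @csq R z.

Lemma csq_ge0 (z : C) : 0 <= csq z.
Proof. by rewrite /csq addr_ge0 // sqr_ge0. Qed.

Lemma csq0 : csq (0 : C) = 0.
Proof. by rewrite /csq /= expr0n /= addr0. Qed.

Lemma csq_eq0 (z : C) : csq z = 0 -> z = 0.
Proof.
case: z => a b; rewrite /csq /= => h.
have ha : a ^+ 2 = 0 by apply/eqP; rewrite eq_le sqr_ge0 andbT -h lerDl sqr_ge0.
have hb : b ^+ 2 = 0 by move: h; rewrite ha add0r.
by move/eqP: ha; rewrite sqrf_eq0 => /eqP->; move/eqP: hb; rewrite sqrf_eq0 => /eqP->.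
Qed.

Lemma Re_mul (x y : C) : complex.Re (x * y) = complex.Re x * complex.Re y - complex.Im x * complex.Im y.
Proof. by case: x => a b; case: y => c e. Qed.
Lemma Im_mul (x y : C) : complex.Im (x * y) = complex.Re x * complex.Im y + complex.Im x * complex.Re y.
Proof. by case: x => a b; case: y => c e. Qed.
Lemma Re_add (x y : C) : complex.Re (x + y) = complex.Re x + complex.Re y.
Proof. by case: x => a b; case: y => c e. Qed.
Lemma Im_add (x y : C) : complex.Im (x + y) = complex.Im x + complex.Im y.
Proof. by case: x => a b; case: y => c e. Qed.


Definition van (s : seq X) (f : X -> C) := forall x, x \notin s -> f x = 0.
Definition nsq (s : seq X) (f : X -> C) : R := \sum_(x <- s) csq (f x).

Lemma nsq_ge0 s f : 0 <= nsq s f.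
Proof. by apply: sumr_ge0 => x _; apply: csq_ge0. Qed.

Lemma sqnorm_seq s f : uniq s -> van s f -> sqnorm f = (nsq s f)%:E.
Proof.
move=> us vs; rewrite /sqnorm (esum_seq us) //.
- by move=> x /vs ->; rewrite /csq /= expr0n /= addr0.
- by move=> x; apply: csq_ge0.
Qed.

Lemma l2_seq s f : uniq s -> van s f -> l2 f.
Proof. by move=> us vs; rewrite /l2 (sqnorm_seq us vs) ltry. Qed.

Lemma norm2_seq s f : uniq s -> van s f -> norm2 f = Num.sqrt (nsq s f).
Proof. by move=> us vs; rewrite /norm2 (sqnorm_seq us vs). Qed.

Lemma nsq_le_sqnorm G f : uniq G -> ((nsq G f)%:E <= sqnorm f)%E.
Proof.
move=> uG; apply: esum_ge; exists [set` G].
  by split; [exact: finite_seq|].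
by rewrite -fsbig_seq // sumEFin.
Qed.

Lemma sqnorm_ge0 f : (0 <= sqnorm f)%E.
Proof. by apply: esum_ge0 => x _; rewrite lee_fin csq_ge0. Qed.

Lemma sqnormE f : l2 f -> sqnorm f = (fine (sqnorm f))%:E.
Proof.
move=> hf; rewrite fineK // ge0_fin_numE //; exact: sqnorm_ge0.
Qed.

Lemma norm2_ge0 f : 0 <= norm2 f.
Proof. exact: sqrtr_ge0. Qed.

Lemma norm2_sq f : norm2 f ^+ 2 = fine (sqnorm f).
Proof. by rewrite /norm2 sqr_sqrtr // fine_ge0 // sqnorm_ge0. Qed.

Lemma nsq_le_norm2 G f : uniq G -> l2 f -> nsq G f <= norm2 f ^+ 2.
Proof.
move=> uG hf; rewrite norm2_sq -lee_fin -sqnormE //; exact: nsq_le_sqnorm.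
Qed.

Lemma csq_le_norm2 f x : l2 f -> csq (f x) <= norm2 f ^+ 2.
Proof.
move=> hf; have := nsq_le_norm2 (G := [:: x]) isT hf.
by rewrite /nsq big_seq1.
Qed.


Local Notation Re := (@complex.Re R).
Local Notation Im := (@complex.Im R).

Lemma csqE (z : C) : csq z = Re z ^+ 2 + Im z ^+ 2.
Proof. by []. Qed.

Lemma csqM (x y : C) : csq (x * y) = csq x * csq y.
Proof. by case: x => a b; case: y => c e; rewrite /csq /=; ring. Qed.

Lemma csq_real (k : R) : csq (k%:C)%C = k ^+ 2.
Proof. by rewrite /csq /= expr0n /= addr0. Qed.

Lemma ReJM (x y : C) : Re (x^* * y)%C = Re x * Re y + Im x * Im y.
Proof. by case: x => a b; case: y => c e; rewrite /=; ring. Qed.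

Lemma ImJM (x y : C) : Im (x^* * y)%C = Re x * Im y - Im x * Re y.
Proof. by case: x => a b; case: y => c e; rewrite /=; ring. Qed.

Lemma csqD (a b : C) : csq (a + b) = csq a + csq b + 2 * Re (a^* * b)%C.
Proof. by case: a => a1 a2; case: b => b1 b2; rewrite /csq /=; ring. Qed.

Lemma ReJ_le (t : R) (a b : C) : 0 < t ->
  2 * Re (a^* * b)%C <= t * csq a + csq b / t.
Proof.
move=> t0; case: a => a1 a2; case: b => b1 b2; rewrite /csq /=.
rewrite -subr_ge0.
have -> : t * (a1 ^+ 2 + a2 ^+ 2) + (b1 ^+ 2 + b2 ^+ 2) / t -
   2 * (a1 * b1 - - a2 * b2) = ((t * a1 - b1) ^+ 2 + (t * a2 - b2) ^+ 2) / t.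
  by field; rewrite gt_eqF.
by apply: divr_ge0; [rewrite addr_ge0 // sqr_ge0|exact: ltW].
Qed.

Lemma csqD_le (h : R) (a b : C) : 0 < h ->
  csq (a + b) <= (1 + h) * csq a + (1 + h^-1) * csq b.
Proof.
move=> h0; rewrite csqD; have H := ReJ_le a b h0.
apply: le_trans (lerD (lexx _) H) _.
by rewrite le_eqVlt; apply/orP; left; apply/eqP; ring.
Qed.

Lemma Re_sum (I : Type) (r : seq I) (F : I -> C) :
  Re (\sum_(i <- r) F i) = \sum_(i <- r) Re (F i).
Proof.
elim: r => [|i r IH]; first by rewrite !big_nil.
by rewrite !big_cons Re_add IH.
Qed.

Lemma Im_sum (I : Type) (r : seq I) (F : I -> C) :
  Im (\sum_(i <- r) F i) = \sum_(i <- r) Im (F i).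
Proof.
elim: r => [|i r IH]; first by rewrite !big_nil.
by rewrite !big_cons Im_add IH.
Qed.

Lemma conj_sum (I : Type) (r : seq I) (F : I -> C) :
  (\sum_(i <- r) F i)^*%C = \sum_(i <- r) (F i)^*%C.
Proof. exact: rmorph_sum. Qed.

Lemma conjM (x y : C) : (x * y)^*%C = (x^* * y^*)%C.
Proof. exact: rmorphM. Qed.

Lemma csq_conjM (z : C) : (z^* * z)%C = (csq z)%:C%C.
Proof. by case: z => a b; rewrite /csq /=; congr Complex; ring. Qed.


Lemma deltaE y x : @delta R X y x = (x == y)%:R.
Proof. rewrite /delta; case: pselect => [e|/eqP/negbTE ->] //=; by move/eqP: e => ->. Qed.

Lemma l2_0 : l2 (fun _ : X => 0 : C).
Proof. by apply: (@l2_seq [::]). Qed.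

Lemma l2_delta y : l2 (@delta R X y).
Proof.
apply: (@l2_seq [:: y]) => // x; rewrite inE deltaE => /negbTE ->; by [].
Qed.

Section Op.
Variable T : (X -> C) -> (X -> C).
Hypothesis bT : bounded_op T.

Lemma Tlinear a xi eta : l2 xi -> l2 eta ->
  T (fun x => a * xi x + eta x) = (fun x => a * T xi x + T eta x).
Proof. by case: bT => _ H _; apply: H. Qed.

Lemma T0 : T (fun _ => 0) = fun _ => 0.
Proof.
have := Tlinear 1 l2_0 l2_0.
have -> : (fun x : X => 1 * 0 + 0 : C) = (fun _ => 0) by apply/funext => x; rewrite mul1r addr0.
move=> H; apply/funext => x; have := congr1 (fun f => f x) H => /=.
rewrite mul1r => h; apply: (addrI (T (fun _ => 0) x)); by rewrite addr0 -h.
Qed.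

Lemma Tscale a xi : l2 xi -> T (fun x => a * xi x) = fun x => a * T xi x.
Proof.
move=> hxi; have := Tlinear a hxi l2_0; rewrite T0.
have -> : (fun x : X => a * xi x + 0) = (fun x => a * xi x) by apply/funext => x; rewrite addr0.
by move=> ->; apply/funext => x; rewrite addr0.
Qed.

Lemma Tadd xi eta : l2 xi -> l2 eta ->
  T (fun x => xi x + eta x) = fun x => T xi x + T eta x.
Proof.
move=> h1 h2; have := Tlinear 1 h1 h2.
have -> : (fun x : X => 1 * xi x + eta x) = (fun x => xi x + eta x) by apply/funext => x; rewrite mul1r.
by move=> ->; apply/funext => x; rewrite mul1r.
Qed.

Lemma Tfin s u x : uniq s -> van s u ->
  T u x = \sum_(y <- s) u y * coef T x y.
Proof.
elim: s u => [|y s IH] u.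
  move=> _ vu; have -> : u = fun _ => 0 by apply/funext => z; apply: vu.
  by rewrite T0 big_nil.
move=> /= /andP [ys us] vu.
pose u' := fun z => if z == y then 0 else u z.
have vu' : van s u'.
  move=> z zs; rewrite /u'; case: eqP => // /eqP zy; apply: vu.
  by rewrite inE negb_or zy.
have Hu : (fun z => u y * @delta R X y z + u' z) = u.
  apply/funext => z; rewrite deltaE /u'; case: eqP => [->|_]; by rewrite ?mulr1 ?addr0 ?mulr0 ?add0r.
have := Tlinear (u y) (l2_delta y) (l2_seq us vu'); rewrite Hu => ->.
rewrite big_cons (IH u' us vu') /coef; congr (_ + _).
rewrite big_seq_cond [RHS]big_seq_cond; apply: eq_bigr => z /andP [zs _].
by rewrite /u'; case: eqP => // zy; move: ys; rewrite -zy zs.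
Qed.

Lemma Tl2 xi : l2 xi -> l2 (T xi).
Proof. by case: bT => H _ _; apply: H. Qed.

Definition opset := [set norm2 (T xi) | xi in [set xi | l2 xi /\ norm2 xi <= 1]].

Lemma opset_sup : has_sup opset.
Proof.
case: bT => _ _ [M HM]; split.
  exists (norm2 (T (fun _ => 0))), (fun _ => 0) => //; split; first exact: l2_0.
  by rewrite (@norm2_seq [::]) // /nsq big_nil sqrtr0.
exists (Num.max M 0) => _ [xi [hxi hn] <-].
apply: le_trans (HM _ hxi) _.
have [M0|M0] := leP 0 M.
  by rewrite -[leRHS]mulr1 ler_wpM2l.
by rewrite nmulr_rle0 // norm2_ge0.
Qed.

Lemma le_opnorm xi : l2 xi -> norm2 xi <= 1 -> norm2 (T xi) <= opnorm T.
Proof.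
move=> h1 h2; have [_ [b hb]] := opset_sup.
by apply: ub_le_sup; [exists b|exists xi].
Qed.

End Op.

Lemma psum_seq_eq0 (s : seq X) (F : X -> R) : (forall x, 0 <= F x) ->
  \sum_(x <- s) F x = 0 -> forall x, x \in s -> F x = 0.
Proof.
move=> F0; elim: s => [|y s IH] //; rewrite big_cons => h x.
have Fy : F y = 0.
  apply/eqP; rewrite eq_le F0 andbT -h lerDl; exact: sumr_ge0.
move: h; rewrite Fy add0r => h; rewrite inE => /orP [/eqP ->//|]; exact: IH.
Qed.

Lemma nsq_bound T (b : R) s u G : bounded_op T -> 0 <= b -> uniq s -> uniq G -> van s u ->
  (forall xi, l2 xi -> norm2 xi = 1 -> supp xi `<=` supp u -> norm2 (T xi) <= b) ->
  nsq G (T u) <= b ^+ 2 * nsq s u.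
Proof.
move=> bT b0 us uG vu H.
have [n0|n0] := eqVneq (nsq s u) 0.
  have u0 : u = fun _ => 0.
    apply/funext => x; have [xs|xs] := boolP (x \in s); last exact: vu.
    by apply: csq_eq0; apply: (psum_seq_eq0 (fun x => csq_ge0 (u x)) n0).
  rewrite n0 mulr0 u0 (T0 bT) /nsq; under eq_bigr do rewrite /csq /= expr0n /= addr0.
  by rewrite big1.
have npos : 0 < nsq s u by rewrite lt_neqAle eq_sym n0 nsq_ge0.
set l := Num.sqrt (nsq s u).
have l0 : 0 < l by rewrite sqrtr_gt0.
have l2n : l ^+ 2 = nsq s u by rewrite sqr_sqrtr // ltW.
pose u' := fun x => (l^-1)%:C%C * u x.
have vu' : van s u' by move=> x /vu; rewrite /u' => ->; rewrite mulr0.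
have nu' : nsq s u' = 1.
  rewrite /nsq /u'; under eq_bigr do rewrite csqM csq_real.
  by rewrite -mulr_sumr -/(nsq s u) -l2n exprVn mulVf // expf_neq0 // gt_eqF.
have hu' : l2 u' := l2_seq us vu'.
have h1 : norm2 u' = 1 by rewrite (norm2_seq us vu') nu' sqrtr1.
have hs : supp u' `<=` supp u.
  by move=> x; rewrite /supp /u' /= => h e; apply: h; rewrite e mulr0.
have Hb := H u' hu' h1 hs.
have hT : l2 (T u') := Tl2 bT hu'.
have := nsq_le_norm2 uG hT.
have Hb2 : norm2 (T u') ^+ 2 <= b ^+ 2 by rewrite lerXn2r // ?nnegrE ?norm2_ge0.
move=> /le_trans /(_ Hb2).
rewrite /u' (Tscale bT _ (l2_seq us vu)) /nsq; under eq_bigr do rewrite csqM csq_real.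
rewrite -mulr_sumr exprVn => h.
rewrite -/(nsq s u) -l2n.
have e : \sum_(x<-G) csq (T u x) = l^+2 * ((l^+2)^-1 * \sum_(x<-G) csq (T u x)).
  by rewrite mulrA mulfV ?mul1r // expf_neq0 // gt_eqF.
rewrite e [b ^+ 2 * _]mulrC; apply: ler_wpM2l => //; exact: sqr_ge0.
Qed.


Lemma esum_approx (F : X -> R) (a : R) : 
  (a%:E < \esum_(x in [set: X]) (F x)%:E)%E -> exists G, uniq G /\ a < \sum_(x <- G) F x.
Proof.
move=> /ereal.ereal_sup_gt [_ [A [finA _] <-]] lt.
exists (finmap.enum_fset (fset_set A)); split; first exact: finmap.fset_uniq.
by move: lt; rewrite fsbig_finite // sumEFin lte_fin.
Qed.

Lemma sqnorm_approx f (a : R) : (a%:E < sqnorm f)%E -> exists G, uniq G /\ a < nsq G f.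
Proof. exact: esum_approx. Qed.

Lemma ereal_split (x y : R) (z : \bar R) : x%:E = (y%:E + z)%E -> z = (x - y)%:E.
Proof.
case: z => [r| |] //= [->]; congr EFin; ring.
Qed.

Lemma approx T (g : R) : bounded_op T -> opnorm T = 1 -> g < 1 ->
  exists s xi G, [/\ uniq s, van s xi, nsq s xi <= 1, uniq G & g < nsq G (T xi)].
Proof.
move=> bT oT g1.
wlog g0 : g g1 / 0 <= g.
  move=> H; have [g0|g0] := leP 0 g; first exact: H.
  have [s [xi [G [h1 h2 h3 h4 h5]]]] := H 0 ltr01 (lexx 0).
  by exists s, xi, G; split => //; apply: lt_trans h5.
set e := (1 + g) / 2.
have e1 : e < 1 by rewrite /e; lra.
have e0 : 0 <= e by rewrite /e; lra.
have eg : g < e ^+ 2 by rewrite /e; nra.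
have e1' : 0 < 1 - e by lra.
have [_ [xi0 [hxi0 nxi0] <-]] := sup_adherent e1' (opset_sup bT).
rewrite -/(opnorm T) oT (_ : 1 - (1 - e) = e); last by ring.
move=> Txe.
have hT0 : l2 (T xi0) := Tl2 bT hxi0.
set g2 := norm2 (T xi0) ^+ 2.
have g2g : g < g2 by apply: lt_le_trans eg _; rewrite /g2 lerXn2r // ?nnegrE ?norm2_ge0 // ltW.
set g3 := (g2 + g) / 2.
have [G [uG hG]] : exists G, uniq G /\ g3 < nsq G (T xi0).
  apply: sqnorm_approx; rewrite sqnormE // -norm2_sq -/g2 lte_fin /g3; lra.
have g21 : g2 <= 1.
  rewrite /g2 -(expr1n _ 2) lerXn2r // ?nnegrE ?norm2_ge0 //.
  by rewrite -oT; apply: le_opnorm.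
set D := g3 - g.
have D0 : 0 < D by rewrite /D /g3; lra.
set h := D / 4.
have h0 : 0 < h by rewrite /h; lra.
case: (bT) => _ _ [M HM].
set del := D / (2 * (1 + h^-1) * (M ^+ 2 + 1)).
have hinv0 : 0 < h^-1 by rewrite invr_gt0.
have M20 : 0 < M ^+ 2 + 1 by have := sqr_ge0 M; lra.
have del0 : 0 < del.
  by rewrite /del divr_gt0 // !mulr_gt0 //; lra.
have [K [uK hK]] : exists K, uniq K /\ fine (sqnorm xi0) - del < nsq K xi0.
  apply: sqnorm_approx; rewrite {2}sqnormE // lte_fin; lra.
pose xiK := fun x => if x \in K then xi0 x else 0.
pose t := fun x => if x \in K then 0 else xi0 x.
have vK : van K xiK by move=> x /negbTE; rewrite /xiK => ->.
have nK : nsq K xiK = nsq K xi0.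
  by rewrite /nsq big_seq_cond [RHS]big_seq_cond; apply: eq_bigr => x /andP [xK _]; rewrite /xiK xK.
have hxiK : l2 xiK := l2_seq uK vK.
have split0 : sqnorm xi0 = (sqnorm xiK + sqnorm t)%E.
  rewrite /sqnorm -esumD; last 2 first.
  - by move=> x _; rewrite lee_fin csq_ge0.
  - by move=> x _; rewrite lee_fin csq_ge0.
  apply: eq_esum => x _; rewrite /xiK /t; case: (x \in K);
   by rewrite ?csq0 ?addr0 ?add0r.
have st : sqnorm t = (fine (sqnorm xi0) - nsq K xi0)%:E.
  apply: ereal_split; rewrite -sqnormE // split0 (sqnorm_seq uK vK) nK //.
have ht : l2 t by rewrite /l2 st ltry.
have nt : norm2 t ^+ 2 < del by rewrite norm2_sq st /=; lra.
have exi : xi0 = fun x => xiK x + t x.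
  by apply/funext => x; rewrite /xiK /t; case: (x \in K); rewrite ?addr0 ?add0r.
have eT : T xi0 = fun x => T xiK x + T t x by rewrite exi; apply: Tadd.
exists K, xiK, G; split => //.
  by rewrite nK; apply: le_trans (nsq_le_norm2 uK hxi0) _; rewrite -(expr1n _ 2) lerXn2r // ?nnegrE ?norm2_ge0.
have Ht : nsq G (T t) <= (M ^+ 2 + 1) * del.
  apply: le_trans (nsq_le_norm2 uG (Tl2 bT ht)) _.
  have h1 := HM _ ht.
  apply: le_trans (_ : (M * norm2 t) ^+ 2 <= _).
    by rewrite lerXn2r // ?nnegrE ?norm2_ge0 //; apply: le_trans h1; exact: norm2_ge0.
  rewrite exprMn; apply: le_trans (_ : M ^+ 2 * del <= _).
    by apply: ler_wpM2l; [exact: sqr_ge0| exact: ltW].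
  by rewrite ler_wpM2r ?lerDl // ltW.
have Hs : nsq G (T xi0) <= (1 + h) * nsq G (T xiK) + (1 + h^-1) * nsq G (T t).
  rewrite /nsq !mulr_sumr -big_split /=; apply: ler_sum => x _.
  by rewrite eT; apply: csqD_le.
have E : (1 + h^-1) * ((M ^+ 2 + 1) * del) = D / 2.
  rewrite /del; field; rewrite (gt_eqF h0) (gt_eqF M20) gt_eqF //; lra.
have Ht' : (1 + h^-1) * nsq G (T t) <= D / 2.
  by rewrite -E; apply: ler_wpM2l => //; lra.
have N0 := nsq_ge0 G (T xiK).
rewrite ltNge; apply/negP => Ng.
have : (1 + h) * nsq G (T xiK) <= g + h.
  have : (1 + h) * nsq G (T xiK) <= (1 + h) * g by apply: ler_wpM2l => //; lra.
  move=> /le_trans; apply; nra.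
rewrite /h /D /g3 in Hs Ht' hG *.
lra.
Qed.


Lemma sum_excl (r : seq nat) (p : pred nat) (c : R) : uniq r ->
  (forall i j, p i -> p j -> i = j) -> 0 <= c -> \sum_(j <- r) (p j)%:R * c <= c.
Proof.
move=> ur pe c0; elim: r ur => [|i r IH] /=; first by rewrite big_nil.
move=> /andP [ir ur]; rewrite big_cons; case: (boolP (p i)) => pi.
  rewrite big_seq big1 ?addr0 ?mul1r // => j jr; case: (boolP (p j)) => pj; last by rewrite mul0r.
  by move: ir; rewrite (pe _ _ pi pj) jr.
by rewrite mul0r add0r IH.
Qed.

Section Metric.
Variable d : X -> X -> R.
Hypothesis md : is_metric d.

Lemma d_ge0 x y : 0 <= d x y. Proof. by case: md. Qed.
Lemma d_sym x y : d x y = d y x. Proof. by case: md. Qed.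
Lemma d_tri x y z : d x z <= d x y + d y z. Proof. by case: md. Qed.
Lemma d_refl x : d x x = 0. Proof. by case: md => _ H _ _; apply/H. Qed.

Variable F : seq X.
Definition In (a : R) (x : X) : bool := has (fun q => d x q <= a) F.

Lemma In_mono a b x : a <= b -> In a x -> In b x.
Proof. by move=> ab /hasP [q qF h]; apply/hasP; exists q => //; apply: le_trans ab. Qed.

Lemma In_prop a r x y : In a x -> d x y <= r -> In (a + r) y.
Proof.
move=> /hasP [q qF h] dxy; apply/hasP; exists q => //.
apply: le_trans (d_tri y x q) _; rewrite d_sym addrC; exact: lerD.
Qed.

Lemma In_F a x : 0 <= a -> x \in F -> In a x.
Proof. by move=> a0 xF; apply/hasP; exists x => //; rewrite d_refl. Qed.

Definition DF := \sum_(f <- F) \sum_(f' <- F) d f f'.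

Lemma sum_term (r : seq X) (G : X -> R) y : (forall x, 0 <= G x) -> y \in r ->
  G y <= \sum_(x <- r) G x.
Proof.
move=> G0; elim: r => [|z r IH] //; rewrite inE big_cons => /orP [/eqP ->|yr].
  by rewrite lerDl sumr_ge0.
by apply: le_trans (IH yr) _; rewrite lerDr.
Qed.

Lemma In_diam a x y : In a x -> In a y -> d x y <= 2 * a + DF.
Proof.
move=> /hasP [q qF hf] /hasP [q' qF' hf'].
have dff : d q q' <= DF.
  apply: le_trans (_ : \sum_(f' <- F) d q f' <= _).
    by apply: (sum_term (G := fun z => d q z)) => // z; apply: d_ge0.
  by apply: (sum_term (G := fun z => \sum_(w <- F) d z w)) => // z; apply: sumr_ge0 => *; apply: d_ge0.
apply: le_trans (d_tri x q y) _; apply: le_trans (lerD (lexx _) (d_tri q q' y)) _.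
rewrite (d_sym q' y); lra.
Qed.

End Metric.


Definition restr (p : pred X) f : X -> C := fun x => if p x then f x else 0.

Lemma van_restr s p f : van s f -> van s (restr p f).
Proof. by move=> vf x /vf; rewrite /restr => ->; case: (p x). Qed.

Lemma nsq_restr_split s p f : nsq s f = nsq s (restr p f) + nsq s (restr (predC p) f).
Proof.
rewrite /nsq -big_split; apply: eq_bigr => x _; rewrite /restr /=.
by case: (p x); rewrite csq0 ?addr0 ?add0r.
Qed.

Lemma Tsupp d r0 T s u y : in_CR d r0 T -> uniq s -> van s u -> T u y != 0 ->
  exists2 z, z \in s & (u z != 0) /\ d y z <= r0.
Proof.
move=> [bT prop] us vu; rewrite (Tfin bT y us vu) => h.
apply: contrapT => H; move/negP: h; apply; apply/eqP.
rewrite big_seq big1 // => z zs.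
have [uz|uz] := eqVneq (u z) 0; first by rewrite uz mul0r.
have [cz|cz] := eqVneq (coef T y z) 0; first by rewrite cz mulr0.
by exfalso; apply: H; exists z => //; split => //; apply: prop; apply/eqP.
Qed.

Section Layer.
Variables (d : X -> X -> R) (r0 c : R) (T : (X -> C) -> (X -> C)) (F s0 G : seq X) (xi : X -> C) (k : nat).
Hypotheses (md : is_metric d) (TC : in_CR d r0 T) (r00 : 0 <= r0) (us0 : uniq s0) (uG : uniq G)
  (vxi : van s0 xi) (k0 : (0 < k)%N) (nxi : nsq s0 xi <= 1).
Let w := r0 + 1.
Let g := 4 * w.
Hypothesis Hc : forall u, van s0 u -> nsq G (T u) <= nsq s0 u.
Hypothesis Hloc : forall m u, 0 <= m <= k%:R * g -> van s0 u -> (forall x, u x != 0 -> In d F m x) ->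
  nsq G (T u) <= c ^+ 2 * nsq s0 u.

Let bT : bounded_op T := TC.1.
Let L (j : nat) (x : X) := In d F (j%:R * g + g) x && ~~ In d F (j%:R * g) x.
Let E (j : nat) := nsq s0 (restr (L j) xi).

Lemma g0 : 0 < g. Proof. have h := r00. rewrite /g /w. lra. Qed.

Lemma sumE : \sum_(0 <= j < k) E j <= 1.
Proof.
apply: le_trans nxi.
have -> : \sum_(0 <= j < k) E j = \sum_(x <- s0) \sum_(0 <= j < k) (L j x)%:R * csq (xi x).
  rewrite [RHS]exchange_big /=; apply: eq_bigr => j _; rewrite /E /nsq; apply: eq_bigr => x _.
  by rewrite /restr; case: (L j x); rewrite ?mul1r ?mul0r // csq0.
apply: ler_sum => x _; apply: sum_excl; [exact: iota_uniq| |exact: csq_ge0].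
have key : forall i j, (i < j)%N -> L i x -> ~~ L j x.
  move=> i j ij /andP [h1 _]; rewrite /L negb_and negbK; apply/orP; right.
  apply: In_mono h1; rewrite -[X in _ + X]mul1r -mulrDl ler_wpM2r ?(ltW g0) //.
  by rewrite natr1 ler_nat.
move=> i j hi hj; case: (ltngtP i j) => // ij.
  by move: (key _ _ ij hi); rewrite hj.
by move: (key _ _ ij hj); rewrite hi.
Qed.

Lemma layer : exists m, 0 <= m /\
  nsq G (T xi) <= c ^+ 2 * nsq s0 (restr (In d F m) xi) +
                  nsq G (T (restr (predC (In d F m)) xi)) + k%:R^-1.
Proof.
have r0p := r00.
have [j0 [jk Ej]] : exists j, (j < k)%N /\ E j <= k%:R^-1.
  apply: contrapT => H.
  have H' : forall j, (0 <= j < k)%N -> k%:R^-1 < E j.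
    move=> j /andP [_ jk]; rewrite ltNge; apply/negP => h; apply: H; exists j; split => //.
  have := ltr_sum_nat k0 H'; rewrite sumr_const_nat subn0 -[_ *+ k]mulr_natl mulfV ?pnatr_eq0 -?lt0n //.
  by move=> /lt_le_trans /(_ sumE); rewrite ltxx.
set a := j0%:R * g.
set m := a + 2 * w.
have a0 : 0 <= a by rewrite /a mulr_ge0 // ltW // g0.
exists m; split; first by rewrite /m /w; lra.
set u := restr (In d F m) xi.
set v := restr (predC (In d F m)) xi.
set uL := restr (fun x => In d F m x && ~~ In d F a x) xi.
set vL := restr (fun x => ~~ In d F m x && In d F (a + g) x) xi.
have vu : van s0 u := van_restr _ vxi.
have vv : van s0 v := van_restr _ vxi.
have vuL : van s0 uL := van_restr _ vxi.
have vvL : van s0 vL := van_restr _ vxi.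
have prop := TC.2.
have Hp : forall y, 2 * complex.Re ((T u y)^* * T v y)%C <= csq (T uL y) + csq (T vL y).
  move=> y.
  have [e|nu] := eqVneq (T u y) 0.
    by rewrite e ReJM /= !mul0r addr0 mulr0 addr_ge0 // csq_ge0.
  have [e|nv] := eqVneq (T v y) 0.
    by rewrite e ReJM /= !mulr0 addr0 mulr0 addr_ge0 // csq_ge0.
  have [z1 z1s [uz1 dz1]] := Tsupp TC us0 vu nu.
  have [z2 z2s [vz2 dz2]] := Tsupp TC us0 vv nv.
  have Im1 : In d F m z1 by move: uz1; rewrite /u /restr; case: ifP => //; rewrite eqxx.
  have Im2 : ~~ In d F m z2 by move: vz2; rewrite /v /restr /=; case: ifP => //; rewrite eqxx.
  have Hy1 : In d F (m + r0) y by apply: (In_prop md Im1); rewrite (d_sym md).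
  have Hy2 : ~~ In d F (m - r0) y.
    apply/negP => h; move: Im2; have := In_prop md h dz2; rewrite subrK => ->.
    by [].
  have eu : T u y = T uL y.
    rewrite (Tfin bT y us0 vu) (Tfin bT y us0 vuL); apply: eq_bigr => z _.
    rewrite /u /uL /restr /=; case: (In d F m z) => //=; case: (boolP (In d F a z)) => //= az.
    have [cz|cz] := eqVneq (coef T y z) 0; first by rewrite cz !mulr0.
    exfalso; move/negP: Hy2; apply; apply: In_mono (_ : a + r0 <= m - r0) _.
      by rewrite /m /w; lra.
    apply: (In_prop md az); rewrite (d_sym md); apply: prop; exact/eqP.
  have ev : T v y = T vL y.
    rewrite (Tfin bT y us0 vv) (Tfin bT y us0 vvL); apply: eq_bigr => z _.
    rewrite /v /vL /restr /=; case: (In d F m z) => //=; case: (boolP (In d F (a + g) z)) => //= az.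
    have [cz|cz] := eqVneq (coef T y z) 0; first by rewrite cz !mulr0.
    exfalso; move/negP: az; apply; apply: In_mono (_ : m + r0 + r0 <= a + g) _.
      by rewrite /m /g /w; lra.
    apply: (In_prop md Hy1); apply: prop; exact/eqP.
  rewrite eu ev; have := ReJ_le (T uL y) (T vL y) ltr01.
  by rewrite mul1r divr1.
have exi : forall y, T xi y = T u y + T v y.
  move=> y; rewrite !(Tfin bT y us0) // -big_split; apply: eq_bigr => z _.
  by rewrite /u /v /restr /=; case: (In d F m z); rewrite ?mul0r ?addr0 ?add0r.
have HE : nsq s0 uL + nsq s0 vL = E j0.
  rewrite /E /nsq -big_split; apply: eq_bigr => x _; rewrite /uL /vL /restr /L -/a /=.
  have am : a <= m by rewrite /m /w; lra.
  have mg : m <= a + g by rewrite /m /g /w; lra.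
  case: (boolP (In d F a x)) => ax.
    by rewrite (In_mono am ax) (In_mono mg (In_mono am ax)) csq0 !addr0.
  case: (boolP (In d F m x)) => mx /=.
    by rewrite (In_mono mg mx) csq0 !addr0.
  by rewrite andbT csq0 add0r.
have Hm : 0 <= m <= k%:R * g.
  apply/andP; split; first by rewrite /m /w; lra.
  have : j0%:R + 1 <= k%:R :> R by rewrite natr1 ler_nat.
  move=> h; apply: le_trans (_ : (j0%:R + 1) * g <= _); last by rewrite ler_wpM2r // ltW // g0.
  by rewrite mulrDl mul1r /m /a /g /w; lra.
have Hu : nsq G (T u) <= c ^+ 2 * nsq s0 u.
  apply: Hloc Hm vu _ => x; rewrite /u /restr; case: ifP => // _; by rewrite eqxx.
have HuL := Hc vuL.
have HvL := Hc vvL.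
have Hsum : nsq G (T xi) <= nsq G (T u) + nsq G (T v) + (nsq G (T uL) + nsq G (T vL)).
  rewrite /nsq -!big_split /=; apply: ler_sum => y _.
  rewrite exi csqD; have := Hp y; lra.
lra.
Qed.

End Layer.


Lemma sum_neq0 (I : eqType) (s : seq I) (Fn : I -> C) :
  \sum_(i <- s) Fn i != 0 -> exists2 i, i \in s & Fn i != 0.
Proof.
elim: s => [|i s IH]; first by rewrite big_nil eqxx.
rewrite big_cons; have [e|ne] := eqVneq (Fn i) 0.
  by rewrite e add0r => /IH [j js h]; exists j => //; rewrite inE js orbT.
by move=> _; exists i => //; rewrite inE eqxx.
Qed.

Section Aop.
Variables (T : (X -> C) -> (X -> C)) (K G : seq X).

Definition Mv (eta : X -> C) (x : X) : C := \sum_(z <- K) eta z * coef T x z.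
Definition Aop (eta : X -> C) (y : X) : C :=
  if y \in K then \sum_(x <- G) (coef T x y)^*%C * Mv eta x else 0.
Definition Sop (k : R) (eta : X -> C) (y : X) : C := (k%:C)%C * Aop eta y.

Lemma van_Aop eta : van K (Aop eta).
Proof. by move=> y /negbTE yK; rewrite /Aop yK. Qed.

Lemma van_Sop k eta : van K (Sop k eta).
Proof. by move=> y /van_Aop h; rewrite /Sop h mulr0. Qed.

Lemma Mv_ext eta eta' : (forall z, z \in K -> eta z = eta' z) -> Mv eta = Mv eta'.
Proof.
move=> h; apply/funext => x; rewrite /Mv big_seq [RHS]big_seq; apply: eq_bigr => z zK.
by rewrite h.
Qed.

Lemma Aop_ext eta eta' : (forall z, z \in K -> eta z = eta' z) -> Aop eta = Aop eta'.
Proof. by move=> h; rewrite /Aop (Mv_ext h). Qed.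

Lemma Mv_lin a xi eta : Mv (fun x => a * xi x + eta x) = fun x => a * Mv xi x + Mv eta x.
Proof.
apply/funext => x; rewrite /Mv mulr_sumr -big_split; apply: eq_bigr => z _.
by rewrite mulrDl mulrA.
Qed.

Lemma Aop_lin a xi eta : Aop (fun x => a * xi x + eta x) = fun y => a * Aop xi y + Aop eta y.
Proof.
apply/funext => y; rewrite /Aop; case: (y \in K); last by rewrite mulr0 addr0.
rewrite Mv_lin mulr_sumr -big_split; apply: eq_bigr => x _.
by rewrite /= mulrDr mulrA (mulrC _ a) mulrA.
Qed.

Lemma Aop_scale a xi : Aop (fun x => a * xi x) = fun y => a * Aop xi y.
Proof.
apply/funext => y; rewrite /Aop; case: (y \in K); last by rewrite mulr0.
rewrite mulr_sumr; apply: eq_bigr => x _.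
rewrite /Mv mulrCA; congr (_ * _); rewrite [RHS]mulr_sumr.
by apply: eq_bigr => z _; rewrite mulrA.
Qed.

Lemma Aop_adj zeta eta :
  \sum_(y <- K) (zeta y)^*%C * Aop eta y = \sum_(x <- G) (Mv zeta x)^*%C * Mv eta x.
Proof.
have -> : \sum_(y <- K) (zeta y)^*%C * Aop eta y =
          \sum_(y <- K) \sum_(x <- G) (zeta y)^*%C * ((coef T x y)^*%C * Mv eta x).
  rewrite big_seq [RHS]big_seq; apply: eq_bigr => y yK.
  by rewrite /Aop yK mulr_sumr.
rewrite exchange_big /=; apply: eq_bigr => x _.
rewrite /Mv conj_sum mulr_suml; apply: eq_bigr => y _.
by rewrite conjM mulrA.
Qed.

Lemma ReC (z : R) : complex.Re ((z%:C)%C : C) = z. Proof. by []. Qed.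

Lemma nsq_Re s (f : X -> C) : nsq s f = complex.Re (\sum_(y <- s) (f y)^*%C * f y).
Proof. by rewrite Re_sum; apply: eq_bigr => y _; rewrite csq_conjM. Qed.

Hypothesis Hc : forall u, van K u -> nsq G (T u) <= nsq K u.
Hypothesis bT : bounded_op T.
Hypothesis uK : uniq K.
Hypothesis uG : uniq G.

Lemma Mv_T eta : Mv eta = T (restr (mem K) eta).
Proof.
have vr : van K (restr (mem K) eta) by move=> z /negbTE zK; rewrite /restr /= zK.
apply/funext => x; rewrite (Tfin bT x uK vr).
rewrite /Mv big_seq [RHS]big_seq; apply: eq_bigr => z zK; by rewrite /restr /= zK.
Qed.

Lemma Mv_contr eta : nsq G (Mv eta) <= nsq K eta.
Proof.
have vr : van K (restr (mem K) eta) by move=> z /negbTE zK; rewrite /restr /= zK.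
rewrite Mv_T; apply: le_trans (Hc vr) _.
by rewrite /nsq big_seq [X in _ <= X]big_seq le_eqVlt; apply/orP; left; apply/eqP; apply: eq_bigr => z zK; rewrite /restr /= zK.
Qed.

Lemma Aop_contr eta : nsq K (Aop eta) <= nsq G (Mv eta).
Proof.
set w := Aop eta.
have e := Aop_adj w eta.
have h1 : nsq K w = \sum_(x <- G) complex.Re ((Mv w x)^*%C * Mv eta x).
  by rewrite nsq_Re -Re_sum -e.
have h2 : 2 * nsq K w <= nsq G (Mv w) + nsq G (Mv eta).
  rewrite h1 mulr_sumr /nsq -big_split; apply: ler_sum => x _.
  by have := ReJ_le (Mv w x) (Mv eta x) ltr01; rewrite mul1r divr1.
have h3 := Mv_contr w.
lra.
Qed.

Lemma Aop_pos eta : \sum_(y <- K) (eta y)^*%C * Aop eta y = ((nsq G (Mv eta))%:C)%C.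
Proof.
rewrite Aop_adj /nsq; under eq_bigr do rewrite csq_conjM.
by rewrite -(@rmorph_sum _ _ (@real_complex R)).
Qed.

Lemma Aop_lower (b : R) eta : 0 < b -> b * nsq K eta <= nsq G (Mv eta) ->
  b ^+ 2 * nsq K eta <= nsq K (Aop eta).
Proof.
move=> b0 h.
have e := Aop_adj eta eta.
have h1 : nsq G (Mv eta) = \sum_(y <- K) complex.Re ((eta y)^*%C * Aop eta y).
  by rewrite nsq_Re -Re_sum -e.
have h2 : 2 * nsq G (Mv eta) <= b * nsq K eta + nsq K (Aop eta) / b.
  rewrite h1 mulr_sumr /nsq mulr_sumr mulr_suml -big_split; apply: ler_sum => y _.
  exact: ReJ_le.
have h3 : b * nsq K eta <= nsq K (Aop eta) / b by lra.
by move: h3; rewrite ler_pdivlMr // mulrC mulrA -expr2.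
Qed.

End Aop.


Lemma max_sub (r : R) : Num.max r 0 - Num.max (- r) 0 = r.
Proof.
case: (lerP 0 r) => h; case: (lerP 0 (- r)) => h'; lra.
Qed.

Lemma rsum_seq s (g : X -> R) : uniq s -> (forall x, x \notin s -> g x = 0) ->
  rsum g = \sum_(x <- s) g x.
Proof.
move=> us vg; rewrite /rsum.
rewrite (esum_seq (f := fun x => Num.max (g x) 0) us); last 2 first.
- by move=> x /vg ->; rewrite maxxx.
- by move=> x; rewrite le_max lexx orbT.
rewrite (esum_seq (f := fun x => Num.max (- g x) 0) us); last 2 first.
- by move=> x /vg ->; rewrite oppr0 maxxx.
- by move=> x; rewrite le_max lexx orbT.
by rewrite /= -sumrB; apply: eq_bigr => x _; rewrite max_sub.
Qed.

Lemma csum_seq s f : uniq s -> van s f -> csum f = \sum_(x <- s) f x.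
Proof.
move=> us vf; rewrite /csum (rsum_seq (g := fun x => complex.Re (f x)) us); last first.
  by move=> x /vf ->.
rewrite (rsum_seq (g := fun x => complex.Im (f x)) us); last by move=> x /vf ->.
by rewrite -Re_sum -Im_sum; case: (\sum_(x <- s) f x).
Qed.

Lemma sup_scale (E : set R) (k : R) : 0 < k -> has_sup E ->
  sup [set k * x | x in E] = k * sup E.
Proof.
move=> k0 [[x0 Ex0] [b hb]].
have ne : [set k * x | x in E] !=set0 by exists (k * x0), x0.
have hsE : has_sup E by split; [exists x0|exists b].
have ub : ubound [set k * x | x in E] (k * sup E).
  move=> _ [x Ex <-]; rewrite ler_pM2l //; exact: sup_upper_bound.
apply/le_anti/andP; split; first exact: ge_sup.
have hs' : has_sup [set k * x | x in E] by split => //; exists (k * sup E).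
rewrite -ler_pdivlMl //; apply: ge_sup; first by exists x0.
move=> x Ex; rewrite ler_pdivlMl //; apply: sup_upper_bound => //; by exists x.
Qed.


Section SopProps.
Variables (d : X -> X -> R) (r0 : R) (T : (X -> C) -> (X -> C)) (K G : seq X).
Hypotheses (md : is_metric d) (TC : in_CR d r0 T) (uK : uniq K) (uG : uniq G).
Hypothesis Hc : forall u, van K u -> nsq G (T u) <= nsq K u.
Let bT : bounded_op T := TC.1.

Lemma nsq_Sop k eta : nsq K (Sop T K G k eta) = k ^+ 2 * nsq K (Aop T K G eta).
Proof. by rewrite /nsq mulr_sumr; apply: eq_bigr => y _; rewrite /Sop csqM csq_real. Qed.

Lemma Sop1 eta : Sop T K G 1 eta = Aop T K G eta.
Proof. by apply/funext => y; rewrite /Sop mul1r. Qed.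

Lemma norm2_Sop k eta : 0 <= k -> norm2 (Sop T K G k eta) = k * norm2 (Sop T K G 1 eta).
Proof.
move=> k0; rewrite !(norm2_seq uK (@van_Sop T K G _ _)) !nsq_Sop expr1n mul1r.
by rewrite sqrtrM ?sqr_ge0 // sqrtr_sqr ger0_norm.
Qed.

Lemma Aop_bound eta : l2 eta -> nsq K (Aop T K G eta) <= norm2 eta ^+ 2.
Proof.
move=> h; apply: le_trans (Aop_contr Hc bT uK eta) _.
apply: le_trans (Mv_contr Hc bT uK eta) _; exact: nsq_le_norm2.
Qed.

Lemma bounded_Sop k : 0 <= k -> bounded_op (Sop T K G k).
Proof.
move=> k0; split.
- by move=> xi _; apply: (l2_seq uK); apply: van_Sop.
- move=> a xi eta _ _; rewrite /Sop Aop_lin; apply/funext => y /=.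
  by rewrite mulrDr mulrCA.
- exists k => xi hxi; rewrite (norm2_seq uK (@van_Sop T K G _ _)) nsq_Sop.
  rewrite -[k * _](@ger0_norm _ (k * norm2 xi)) ?mulr_ge0 ?norm2_ge0 // -sqrtr_sqr.
  rewrite ler_sqrt ?exprMn ?mulr_ge0 ?sqr_ge0 ?nsq_ge0 //; first exact: (ler_wpM2l (sqr_ge0 k) (Aop_bound hxi)); exact: norm2_ge0.
Qed.

Lemma prop_Sop k x y : coef (Sop T K G k) x y <> 0 -> d x y <= r0 + r0.
Proof.
move=> /eqP; rewrite /coef /Sop mulf_eq0 negb_or => /andP [_].
rewrite /Aop; case: ifP => xK; last by rewrite eqxx.
move=> /sum_neq0 [q qG]; rewrite mulf_eq0 negb_or => /andP [c1 c2].
move: c2 => /sum_neq0 [z zK]; rewrite mulf_eq0 negb_or deltaE => /andP [dz c3].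
have zy : z = y by apply/eqP; apply: contraNT dz => /negbTE ->.
move: c3; rewrite zy => c3.
have h1 : d q x <= r0 by apply: TC.2; apply/eqP; move: c1; rewrite conjc_eq0.
have h2 : d q y <= r0 by apply: TC.2; apply/eqP.
apply: le_trans (d_tri md x q y) _; rewrite (d_sym md x q); exact: lerD.
Qed.

Lemma positive_Sop k : 0 <= k -> positive_op (Sop T K G k).
Proof.
move=> k0 eta _; rewrite /inner (csum_seq uK); last first.
  by move=> y /(van_Sop T G k eta) ->; rewrite mulr0.
under eq_bigr do rewrite /Sop mulrCA.
by rewrite -mulr_sumr Aop_pos -rmorphM /= ler0c mulr_ge0 // nsq_ge0.
Qed.

Lemma opnorm_Sop k : 0 < k -> opnorm (Sop T K G k) = k * opnorm (Sop T K G 1).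
Proof.
move=> k0; rewrite /opnorm -sup_scale //; last exact: (opset_sup (bounded_Sop ler01)).
congr sup; apply/seteqP; split => [_ [xi hxi <-]|_ [_ [xi hxi <-] <-]].
  by exists (norm2 (Sop T K G 1 xi)); [exists xi|rewrite [RHS]norm2_Sop //; exact: ltW].
by exists xi => //; rewrite norm2_Sop //; exact: ltW.
Qed.

Lemma Sop_restr k eta :
  Sop T K G k eta = restr_ind [set x | x \in K] (Sop T K G k (restr_ind [set x | x \in K] eta)).
Proof.
apply/funext => y; rewrite /restr_ind; case: pselect => /= h; last first.
  by apply: (van_Sop T G k eta); apply/negP.
rewrite /Sop (Aop_ext _ _ (eta' := fun x => if pselect ([set x | x \in K] x) then eta x else 0)) //.
by move=> z zK; case: pselect => //= /(_ zK).
Qed.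

End SopProps.


Lemma diam_mono d (A B : set X) (S S' : R) : diam_le d A S -> B `<=` A -> S <= S' -> diam_le d B S'.
Proof. by move=> h BA SS x y Bx By; apply: le_trans (h _ _ (BA _ Bx) (BA _ By)) SS. Qed.

Lemma normalize K (v : X -> C) : uniq K -> van K v -> 0 < nsq K v ->
  let v' := fun x => ((Num.sqrt (nsq K v))^-1)%:C%C * v x in
  [/\ van K v', nsq K v' = 1 & forall G (T : (X -> C) -> (X -> C)), nsq K (Aop T K G v') = (nsq K v)^-1 * nsq K (Aop T K G v)].
Proof.
move=> uK vv N0 v'; rewrite /v'; set l := Num.sqrt (nsq K v).
have l0 : 0 < l by rewrite sqrtr_gt0.
have l2n : l ^+ 2 = nsq K v by rewrite sqr_sqrtr // ltW.
split.
- by move=> x /vv => ->; rewrite mulr0.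
- rewrite /nsq; under eq_bigr do rewrite csqM csq_real.
  by rewrite -mulr_sumr -/(nsq K v) -l2n exprVn mulVf // expf_neq0 // gt_eqF.
- move=> G T; rewrite Aop_scale /nsq; under eq_bigr do rewrite csqM csq_real.
  by rewrite -mulr_sumr -/(nsq K v) -l2n exprVn.
Qed.

Lemma step d (r0 c : R) (md : is_metric d) (r00 : 0 <= r0) (c0 : 0 < c) (c1 : c < 1)
  (Hnot : forall S, 0 < S -> exists T, [/\ in_CR d r0 T, opnorm T = 1 &
     forall xi, l2 xi -> norm2 xi = 1 -> diam_le d (supp xi) S -> norm2 (T xi) < c])
  (F : seq X) (s : R) (s0 : 0 < s) :
  exists K (Tn : (X -> C) -> (X -> C)), [/\ uniq K /\ (forall x, x \in K -> x \notin F),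
    in_CR d (r0 + r0 + 1) Tn, positive_op Tn /\ opnorm Tn = 1,
    (forall xi, l2 xi -> Tn xi = restr_ind [set x | x \in K] (Tn (restr_ind [set x | x \in K] xi))) &
    (forall xi, l2 xi -> norm2 xi = 1 -> diam_le d (supp xi) s -> norm2 (Tn xi) <= 2 * c / (1 + c))].
Proof.
set beta := (1 + c) / 2.
set k := (Num.truncn (4 / (1 - c))).+1.
have k0 : (0 < k)%N by [].
set gg := 4 * (r0 + 1).
have gg0 : 0 < gg by rewrite /gg; lra.
have DF0 : 0 <= DF d F by apply: sumr_ge0 => p _; apply: sumr_ge0 => q _; apply: d_ge0.
set S := s + 2 * (k%:R * gg) + DF d F.
have kR0 : 0 < k%:R :> R by rewrite ltr0n.
have S0 : 0 < S by rewrite /S; have := mulr_gt0 kR0 gg0; lra.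
have [T [TC oT Tf]] := Hnot S S0.
have bT : bounded_op T := TC.1.
have Hcg : forall s1 u G, uniq s1 -> uniq G -> van s1 u -> nsq G (T u) <= nsq s1 u.
  move=> s1 u G us1 uG vu; have := nsq_bound bT ler01 us1 uG vu.
  rewrite expr1n mul1r; apply => xi hxi nxi _; rewrite -oT; apply: le_opnorm => //.
  by rewrite nxi.
have Hlg : forall s1 u G, uniq s1 -> uniq G -> van s1 u -> diam_le d (supp u) S ->
    nsq G (T u) <= c ^+ 2 * nsq s1 u.
  move=> s1 u G us1 uG vu du; apply: nsq_bound bT (ltW c0) us1 uG vu _.
  move=> xi hxi nxi sxi; apply: ltW; apply: Tf => //; exact: diam_mono du sxi (lexx _).
have g1 : (3 + c) / 4 < 1 by lra.
have [s1 [xi [G [us1 vxi nxi uG hxi]]]] := approx bT oT g1.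
have Hloc : forall (m : R) u, 0 <= m <= k%:R * gg -> van s1 u -> (forall x, u x != 0 -> In d F m x) ->
    nsq G (T u) <= c ^+ 2 * nsq s1 u.
  move=> m u /andP [m0 mk] vu su; apply: Hlg => //.
  move=> x y /eqP/su Hx /eqP/su Hy; apply: le_trans (In_diam md Hx Hy) _.
  rewrite /S; lra.
have [m [m0 Hm]] := layer md TC r00 us1 vxi k0 nxi (fun u => Hcg _ u _ us1 uG) Hloc.
set u := restr (In d F m) xi.
set v := restr (predC (In d F m)) xi.
have UV := nsq_restr_split s1 (In d F m) xi.
rewrite -/u -/v in UV.
have hk : 4 / (1 - c) < k%:R by rewrite /k; apply: truncnS_gt.
have ik : k%:R^-1 < (1 - c) / 4.
  have c1' : 0 < 1 - c by lra.
  move: hk; rewrite ltr_pdivrMr // => hk.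
  rewrite ltr_pdivlMr // -(ltr_pM2l kR0) mulrA mulfV ?mul1r; last by rewrite gt_eqF.
  by [].
set U := nsq s1 u. set V := nsq s1 v. set Tv := nsq G (T v).
move: UV Hm; rewrite -/U -/V -/Tv => UV Hm.
have U0 : 0 <= U := nsq_ge0 _ _.
have V0 : 0 <= V := nsq_ge0 _ _.
have c2 : c ^+ 2 <= c by rewrite expr2 ler_piMr // ltW.
have cU : c ^+ 2 * U <= c ^+ 2 * (1 - V) by apply: ler_wpM2l; [exact: sqr_ge0|lra].
have Tvlow : beta - c ^+ 2 + c ^+ 2 * V < Tv.
  rewrite /beta; move: cU; rewrite mulrBr mulr1; lra.
have Tv0 : 0 < Tv by have := mulr_ge0 (sqr_ge0 c) V0; rewrite /beta in Tvlow; lra.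
have TvV : beta * V <= Tv.
  have : 0 <= (beta - c ^+ 2) * (1 - V) by apply: mulr_ge0; rewrite /beta; lra.
  rewrite mulrBr mulr1 mulrBl => h; lra.
set K := seq.filter (predC (In d F m)) s1.
have uK : uniq K by rewrite filter_uniq.
have vK : van K v.
  move=> x; rewrite mem_filter negb_and /v /restr /= negbK => /orP [->//|xs].
  by case: ifP => // _; apply: vxi.
have nKv : nsq K v = V.
  rewrite /V /nsq big_filter [RHS](bigID (In d F m)) /= [X in _ = X + _]big1 ?add0r //.
  by move=> x hx; rewrite /v /restr /= hx csq0.
have HcK : forall u, van K u -> nsq G (T u) <= nsq K u by move=> u' vu'; apply: Hcg.
have MvT : Mv T K v = T v.
  by apply/funext => x; rewrite (Tfin bT x uK vK).
have beta0 : 0 < beta by rewrite /beta; lra.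
have Hlow : beta ^+ 2 * nsq K v <= nsq K (Aop T K G v).
  by apply: Aop_lower => //; rewrite MvT nKv.
have NK0 : 0 < nsq K v by apply: lt_le_trans Tv0 _; apply: Hcg.
set alpha := opnorm (Sop T K G 1).
have bS1 : bounded_op (Sop T K G 1) := bounded_Sop TC uK HcK ler01.
have alpha_ge : beta <= alpha.
  have [vv' nv' eA] := normalize uK vK NK0.
  set v' := fun x => _ in vv' nv' eA.
  have l2v' : l2 v' := l2_seq uK vv'.
  apply: le_trans (le_opnorm bS1 l2v' _); last by rewrite (norm2_seq uK vv') nv' sqrtr1.
  rewrite (norm2_seq uK (@van_Sop T K G _ _)) nsq_Sop expr1n mul1r eA.
  rewrite -(@ger0_norm _ beta) ?(ltW beta0) // -sqrtr_sqr ler_sqrt; last first.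
    by rewrite mulr_ge0 ?nsq_ge0 // invr_ge0 nsq_ge0.
  by rewrite ler_pdivlMl // mulrC.
have alpha0 : 0 < alpha by apply: lt_le_trans alpha_ge.
exists K, (Sop T K G alpha^-1); split => //.
- split => // x; rewrite mem_filter => /andP [hx _]; apply/negP => xF.
  by move: hx; rewrite /= (In_F md m0 xF).
- split; first by apply: (bounded_Sop TC uK HcK); rewrite invr_ge0; exact: ltW.
  move=> x y h; apply: le_trans (prop_Sop md TC h) _; lra.
- split; first by apply: (positive_Sop T G uK); rewrite invr_ge0; exact: ltW.
  by rewrite (opnorm_Sop TC uK HcK) ?invr_gt0 // mulVf // gt_eqF.
- by move=> eta _; apply: Sop_restr.
move=> eta heta neta deta.
rewrite norm2_Sop ?invr_ge0 ?(ltW alpha0) //.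
have hA : norm2 (Sop T K G 1 eta) <= c.
  rewrite (norm2_seq uK (@van_Sop T K G _ _)) nsq_Sop expr1n mul1r.
  rewrite -(@ger0_norm _ c) ?(ltW c0) // -sqrtr_sqr ler_sqrt ?sqr_ge0 //.
  apply: le_trans (Aop_contr HcK bT uK eta) _.
  rewrite (Mv_T bT uK).
  have vr : van K (restr (mem K) eta) by move=> z /negbTE zK; rewrite /restr /= zK.
  apply: le_trans (Hlg _ _ _ uK uG vr _) _.
    apply: diam_mono deta _ _; last by rewrite /S; have := mulr_gt0 kR0 gg0; lra.
    by move=> x; rewrite /supp /restr /=; case: ifP => // _ h e; apply: h.
  rewrite -[X in _ <= X]mulr1 ler_wpM2l ?sqr_ge0 //.
  have -> : nsq K (restr (mem K) eta) = nsq K eta.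
    by rewrite /nsq big_seq [RHS]big_seq; apply: eq_bigr => z zK; rewrite /restr /= zK.
  by rewrite -(expr1n _ 2) -neta; apply: nsq_le_norm2.
have ab : alpha^-1 <= beta^-1 by rewrite lef_pV2 ?posrE.
apply: le_trans (_ : alpha^-1 * c <= _).
  by apply: ler_wpM2l => //; rewrite invr_ge0; exact: ltW.
apply: le_trans (_ : beta^-1 * c <= _).
  by apply: ler_wpM2r => //; exact: ltW.
by rewrite /beta invf_div mulrAC.
Qed.

End Base.

Theorem lemma4p2 (R : realType) (X : choiceType) (d : X -> X -> R) :
  is_metric d -> bounded_geometry d -> ~ ONL d ->
  exists (r kappa : R) (T : nat -> (X -> R[i]) -> (X -> R[i]))
         (B : nat -> set X) (S : nat -> R),
    [/\ 0 < r /\ kappa < 1,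
        (forall n, in_CR d r (T n)) /\ (forall n, finite_set (B n)) /\ (forall n, 0 < S n) /\
        (* (a) *) (forall n, S n < S n.+1) /\ (S @ \oo --> +oo),
        (* (b) *) (forall n, positive_op (T n) /\ opnorm (T n) = 1) /\
        (* (c) *) (forall n m, n <> m -> B n `&` B m = set0),
        (* (d) *) (forall n xi, l2 xi -> T n xi = restr_ind (B n) (T n (restr_ind (B n) xi))) &
        (* (e) *) (forall n xi, l2 xi -> norm2 xi = 1 -> diam_le d (supp xi) (S n) ->
                    norm2 (T n xi) <= kappa)].
Proof.
move=> md _ nONL.
have [r0 [c [r00 /andP [c0 c1] Hnot]]] : exists r0 c, [/\ 0 <= r0, 0 < c < 1 &
    forall S, 0 < S -> exists T, [/\ in_CR d r0 T, opnorm T = 1 &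
      forall xi, l2 xi -> norm2 xi = 1 -> diam_le d (supp xi) S -> norm2 (T xi) < c]].
  apply: contrapT => H; apply: nONL => r c r0 hc.
  apply: contrapT => HS; apply: H; exists r, c; split => // S S0.
  apply: contrapT => HT; apply: HS; exists S; split => // T TC oT.
  apply: contrapT => Hxi; apply: HT; exists T; split => // xi h1 h2 h3.
  rewrite ltNge; apply/negP => h4; apply: Hxi; by exists xi; split.
have stepF : forall (F : seq X) (n : nat), exists KT : seq X * ((X -> R[i]) -> (X -> R[i])),
  [/\ uniq KT.1 /\ (forall x, x \in KT.1 -> x \notin F),
    in_CR d (r0 + r0 + 1) KT.2, positive_op KT.2 /\ opnorm KT.2 = 1,
    (forall xi, l2 xi -> KT.2 xi = restr_ind [set x | x \in KT.1] (KT.2 (restr_ind [set x | x \in KT.1] xi))) &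
    (forall xi, l2 xi -> norm2 xi = 1 -> diam_le d (supp xi) n.+1%:R -> norm2 (KT.2 xi) <= 2 * c / (1 + c))].
  move=> F n; have [K [Tn H]] := step md r00 c0 c1 Hnot F (ltr0Sn _ n).
  by exists (K, Tn).
pose pick F n := projT1 (cid (stepF F n)).
have spec : forall F n, _ := fun F n => projT2 (cid (stepF F n)).
pose state := fix st (n : nat) : seq X := if n is n'.+1 then st n' ++ (pick (st n') n').1 else [::].
exists (r0 + r0 + 1), (2 * c / (1 + c)), (fun n => (pick (state n) n).2),
  (fun n => [set x | x \in (pick (state n) n).1]), (fun n => n.+1%:R).
have Kin : forall m n, (m < n)%N -> forall x, x \in (pick (state m) m).1 -> x \in state n.
  move=> m n; elim: n => [//|n IH] mn x xm /=; rewrite mem_cat.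
  move: mn; rewrite ltnS leq_eqVlt => /orP [/eqP e|mn].
    by rewrite -e xm orbT.
  by rewrite IH.
split.
- split; first lra.
  by rewrite ltr_pdivrMr; lra.
- split; first by move=> n; case: (spec (state n) n).
  split; first by move=> n; apply: finite_seq.
  split; first by move=> n; rewrite ltr0n.
  split; first by move=> n; rewrite ltr_nat.
  apply: (ger_cvgy _ cvgr_idn); apply: nearW => n; rewrite ler_nat; exact: leqnSn.
- split; first by move=> n; case: (spec (state n) n).
  move=> n m nm; apply/seteqP; split => // x [/= hn hm].
  have [mn|nm'|e] := ltngtP m n.
  + by case: (spec (state n) n) => [[_ h] _ _ _ _]; move: (h x hn); rewrite (Kin _ _ mn x hm).
  + by case: (spec (state m) m) => [[_ h] _ _ _ _]; move: (h x hm); rewrite (Kin _ _ nm' x hn).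
  + by exfalso; apply: nm.
- by move=> n xi hxi; case: (spec (state n) n) => _ _ _ h _; apply: h.
- by move=> n xi h1 h2 h3; case: (spec (state n) n) => _ _ _ _ h; apply: h.
Qed.
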